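(* Let $M\in\Lambda_{\mathrm{NF}}$ have blueprint $\alpha$, and suppose $\alpha\rhd^{b^m_0}_{\omega_m}\cdots\rhd^{b^m_{p_m}}_{\omega_m}\ \cdots\ \rhd^{b^1_0}_{\omega_1}\cdots\rhd^{b^1_{p_1}}_{\omega_1}\emptyset_{\mathbb B}$ (through some intermediate blueprints). Then for every strictly increasing sequence of variables $Y=(y_1,\dots,y_m)$ with $\Omega(Y)=(\omega_1,\dots,\omega_m)$, there exists a term $N$ with the same domain, the same blueprint and the same type as $M$ such that $\mathrm{Free}(N)=Y$ and $\{b : N|_b=y_i\}=\{b^i_0,\dots,b^i_{p_i}\}$ for each $i$.
   Context: Formulas are built from atoms with $\to$. Let $\mathcal X$ be a countably infinite set of variables with an injective map $\mathcal O:\mathcal X\to\mathbb N$; $x<y$ iff $\mathcal O(x)<\mathcal O(y)$. Terms are pure $\lambda$-terms over $\mathcal X$, not identified up to $\alpha$-conversion; no two $\lambda$'s bind the same variable and no variable is both free and bound. $\mathrm{Free}(M)$ is the strictly increasing sequence of free variables of $M$. HRM terms: variables; $\lambda x.M$ with $M$ HRM and $x$ the greatest free variable of $M$; $(MN)$ with $M,N$ HRM and every free variable of $M$ $\le$ some free variable of $N$. Fix $\Omega$ from variables to formulas with each $\Omega^{-1}(\phi)$ infinite; $\Omega(y_1,\dots,y_m)=(\Omega(y_1),\dots,\Omega(y_m))$. Typing: $x:\Omega(x)$; $\lambda x.M:\chi\to\psi$ if $x:\chi$, $M:\psi$, $\lambda x.M$ HRM; $(MN):\psi$ if $M:\chi\to\psi$,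 $N:\chi$, $(MN)$ HRM. $\Lambda_{\mathrm{NF}}$ is the set of typed $\beta$-normal terms. Addresses are finite sequences of positive integers with prefix order $\le$, concatenation $\cdot$, empty address $\varepsilon$. Terms are identified with trees: $x$ is $\varepsilon\mapsto x$; $\lambda x.M$ maps $\varepsilon$ to $\lambda x$ with subtree $M$ at $(1)$; $(M_1M_2)$ maps $\varepsilon$ to $@$ with subtrees $M_1,M_2$ at $(1),(2)$; $M|_a$ is the subterm at $a$, $\mathrm{dom}(M)$ its set of addresses. For a partial tree $\pi$, $\pi|_a$ is $c\mapsto\pi(a\cdot c)$. Let $\mathfrak S$ consist of all formulas (arity 0) and symbols $@_\phi$ (arity 2). A blueprint is a finite partial tree with values in $\mathfrak S$ such that if $\alpha(a)=@_\phi$ then $\alpha|_{a\cdot(1)},\alpha|_{a\cdot(2)}$ are non-empty. Notation: $\emptyset_{\mathbb B}$ empty blueprint; $\phi$ denotes $\varepsilon\mapsto\phi$; $@_\phi(\alpha_1,\alpha_2)$ ($\alpha_i$ non-empty) has root $@_\phi$ and $\alpha_i$ at $(i)$; for pairwise incomparable $\bar a=(a_1,\dots,a_k)$, $*_{\bar a}(\alpha_1,\dots,\alpha_k)$ is the blueprint of minimal domain with restriction $\alpha_i$ at $a_i$; $*(\alpha_1,\dots,\alpha_k)=*_{((1),\dots,(k))}(\dots)$. The stable part of $M\in\Lambda_{\mathrm{NF}}$ is the set of $a\in\mathrm{dom}(M)$ with $\mathrm{Free}(M|_a)\subseteq\mathrm{Free}(M)$ and $M|_a$ a variable or an application. The blueprint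 of $M$ maps each $a$ in the stable part to $\psi$ if $M|_a$ is a variable of type $\psi$, and to $@_\psi$ if $M|_a$ is an application of type $\psi$. Extraction $\alpha\rhd^a_\phi\beta$: (1) $\phi\rhd^\varepsilon_\phi\emptyset_{\mathbb B}$; (2) if $\alpha\rhd^a_\phi\beta$ ($\gamma,\alpha$ non-empty) then $@_\psi(\gamma,\alpha)\rhd^{(2)\cdot a}_\phi*(\gamma,\beta)$; (3) if $\alpha\rhd^a_\phi\beta$, $b\ne\varepsilon$, $(b,c_1,\dots,c_k)$ pairwise incomparable, then $*_{(b,c_1,\dots,c_k)}(\alpha,\gamma_1,\dots,\gamma_k)\rhd^{b\cdot a}_\phi*_{(b,c_1,\dots,c_k)}(\beta,\gamma_1,\dots,\gamma_k)$. *)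

(* Defs.v *)
From mathcomp Require Import all_boot.
Set Implicit Arguments. Unset Strict Implicit. Unset Printing Implicit Defensive.

Inductive formula := Atom of nat | Imp of formula & formula.

Definition formula_eq_dec (a b : formula) : {a = b} + {a <> b}.
Proof. decide equality; decide equality. Defined.

(** * Raw lambda terms over a type of variables [X] (no alpha-conversion). *)
Inductive term (X : Type) := Var of X | Lam of X & term X | App of term X & term X.
Arguments Var {X}. Arguments Lam {X}. Arguments App {X}.

Fixpoint FV {X : eqType} (M : term X) : seq X :=
  match M with
  | Var x => [:: x]
  | Lam x P => [seq y <- FV P | y != x]
  | App P Q => FV P ++ FV Q
  end.

Fixpoint BV {X : Type} (M : term X) : seq X :=
  match M with
  | Var _ => [::]
  | Lam x P => x :: BV P
  | App P Q => BV P ++ BV Q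
  end.

Definition wf_term {X : eqType} (M : term X) : bool :=
  uniq (BV M) && all (fun x => x \notin BV M) (FV M).

Fixpoint beta_normal {X : Type} (M : term X) : bool :=
  match M with
  | Var _ => true
  | Lam _ P => beta_normal P
  | App P Q => (if P is Lam _ _ then false else true) && beta_normal P && beta_normal Q
  end.

(** HRM terms, w.r.t. the order x < y iff O x < O y. *)
Inductive HRM {X : eqType} (O : X -> nat) : term X -> Prop :=
| hrm_var x : HRM O (Var x)
| hrm_lam x P : HRM O P -> x \in FV P -> (forall y, y \in FV P -> O y <= O x) ->
    HRM O (Lam x P)
| hrm_app P Q : HRM O P -> HRM O Q ->
    (forall y, y \in FV P -> exists2 z, z \in FV Q & O y <= O z) ->
    HRM O (App P Q).

(** Typing (Church style via Omega). *)
Inductive has_type {X : eqType} (O : X -> nat) (Om : X -> formula) :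
    term X -> formula -> Prop :=
| ty_var x : has_type O Om (Var x) (Om x)
| ty_lam x P psi : has_type O Om P psi -> HRM O (Lam x P) ->
    has_type O Om (Lam x P) (Imp (Om x) psi)
| ty_app P Q chi psi : has_type O Om P (Imp chi psi) -> has_type O Om Q chi ->
    HRM O (App P Q) -> has_type O Om (App P Q) psi.

Definition Lambda_NF {X : eqType} (O : X -> nat) (Om : X -> formula) (M : term X) : Prop :=
  wf_term M /\ (exists tau, has_type O Om M tau) /\ beta_normal M.

(** Free(M) = Y : Y is the strictly increasing sequence of free variables of M. *)
Definition free_seq {X : eqType} (O : X -> nat) (M : term X) (Y : seq X) : Prop :=
  sorted (fun x y => O x < O y) Y /\ (forall x, (x \in FV M) = (x \in Y)).

Definition addr := seq nat.
Definition addr_ok (a : addr) : bool := all (fun k => 0 < k) a.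
Definition prefix (a d : addr) : bool := take (size a) d == a.
Definition incomparable (a d : addr) : bool := ~~ prefix a d && ~~ prefix d a.

Fixpoint subterm {X : Type} (M : term X) (a : addr) : option (term X) :=
  match a with
  | [::] => Some M
  | k :: c =>
      match M with
      | Var _ => None
      | Lam _ P => if k == 1 then subterm P c else None
      | App P Q => if k == 1 then subterm P c else if k == 2 then subterm Q c else None
      end
  end.

(** Type of a term, computed (only used on typed terms, where it agrees with
    [has_type], which is deterministic). *)
Fixpoint tyof {X : Type} (Om : X -> formula) (M : term X) : option formula :=
  match M with
  | Var x => Some (Om x)
  | Lam x P => omap (Imp (Om x)) (tyof Om P)
  | App P Q =>
      match tyof Om P, tyof Om Q with
      | Some (Imp chi psi), Some chi' => if formula_eq_dec chi chi' then Some psi else None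
      | _, _ => None
      end
  end.

Inductive symb := SForm of formula | SApp of formula.
Definition blueprint := addr -> option symb.

Definition bp_eq (al be : blueprint) : Prop := forall a, al a = be a.
Definition bp_empty : blueprint := fun _ => None.
Definition bp_single (phi : formula) : blueprint :=
  fun a => if a is [::] then Some (SForm phi) else None.
Definition bp_restr (al : blueprint) (a : addr) : blueprint := fun c => al (a ++ c).
Definition bp_nonempty (al : blueprint) : Prop := exists c, al c <> None.

Definition is_blueprint (al : blueprint) : Prop :=
  (exists s : seq addr, forall a, al a <> None -> a \in s) /\
  (forall a, al a <> None -> addr_ok a) /\
  (forall a psi, al a = Some (SApp psi) ->
     bp_nonempty (bp_restr al (rcons a 1)) /\ bp_nonempty (bp_restr al (rcons a 2))).

Definition bp_app (psi : formula) (al1 al2 : blueprint) : blueprint :=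
  fun a => match a with
           | [::] => Some (SApp psi)
           | k :: c => if k == 1 then al1 c else if k == 2 then al2 c else None
           end.

(** *_{as}(bs): bs_i placed at as_i, minimal domain. *)
Fixpoint star_at (as_ : seq addr) (bs : seq blueprint) (d : addr) : option symb :=
  match as_, bs with
  | a :: as', b :: bs' => if prefix a d then b (drop (size a) d) else star_at as' bs' d
  | _, _ => None
  end.
Definition star (as_ : seq addr) (bs : seq blueprint) : blueprint := star_at as_ bs.

Definition bp_of_term {X : eqType} (Om : X -> formula) (M : term X) : blueprint :=
  fun a =>
    match subterm M a with
    | Some P =>
        if all (fun x => x \in FV M) (FV P) then
          match P with
          | Var x => Some (SForm (Om x))
          | App _ _ => omap SApp (tyof Om P)
          | Lam _ _ => None
          end
        else None
    | None => None
    end.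

(** * Extraction  al |>^a_phi be. Blueprints are identified extensionally
    (rule [ex_ext]). *)
Inductive extr : blueprint -> addr -> formula -> blueprint -> Prop :=
| ex_base phi : extr (bp_single phi) [::] phi bp_empty
| ex_app psi ga al a phi be :
    is_blueprint ga -> bp_nonempty ga -> bp_nonempty al ->
    extr al a phi be ->
    extr (bp_app psi ga al) (2 :: a) phi (star [:: [:: 1]; [:: 2]] [:: ga; be])
| ex_star al a phi be b cs gs :
    extr al a phi be -> b != [::] -> addr_ok b -> all addr_ok cs ->
    size cs = size gs -> pairwise incomparable (b :: cs) ->
    (forall i, i < size gs -> is_blueprint (nth bp_empty gs i)) ->
    extr (star (b :: cs) (al :: gs)) (b ++ a) phi (star (b :: cs) (be :: gs))
| ex_ext al al' a phi be be' :
    extr al a phi be -> bp_eq al al' -> bp_eq be be' -> extr al' a phi be'.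

Inductive extr_chain : blueprint -> seq (addr * formula) -> blueprint -> Prop :=
| ch_nil al : extr_chain al [::] al
| ch_cons al a phi be s ga :
    extr al a phi be -> extr_chain be s ga -> extr_chain al ((a, phi) :: s) ga.

(** Given bs = [b^1; ...; b^m] (b^i = [b^i_0; ...; b^i_{p_i}]) and
    oms = [om_1; ...; om_m], the steps in the order
    b^m_0..b^m_{p_m}, ..., b^1_0..b^1_{p_1}. *)
Definition steps (bs : seq (seq addr)) (oms : seq formula) : seq (addr * formula) :=
  flatten (rev [seq [seq (b, om.2) | b <- om.1] | om <- zip bs oms]).

(* Main.v *)
Require Import Defs.
From mathcomp Require Import all_boot.
From HB Require Import structures.
Require Import Defs.
Set Implicit Arguments. Unset Strict Implicit. Unset Printing Implicit Defensive.

Lemma catIl (T : Type) (s a b : seq T) : s ++ a = s ++ b -> a = b.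
Proof. by elim: s => //= x s IH [] /IH. Qed.

Lemma prefixP (a d : addr) : reflect (exists e, d = a ++ e) (prefix a d).
Proof.
rewrite /prefix; apply: (iffP eqP) => [H|[e ->]].
  by exists (drop (size a) d); rewrite -{1}H cat_take_drop.
by rewrite take_size_cat.
Qed.

Lemma prefix_cat (a e : addr) : prefix a (a ++ e).
Proof. by apply/prefixP; exists e. Qed.

Lemma prefix_trans (c d b : addr) : prefix c d -> prefix d b -> prefix c b.
Proof.
move=> /prefixP[e1 ->] /prefixP[e2 ->]; apply/prefixP; exists (e1 ++ e2).
by rewrite catA.
Qed.

Lemma prefix_split (d b a : addr) : prefix d (b ++ a) -> ~~ prefix b d -> prefix d b.
Proof.
rewrite /prefix take_cat; case: ltnP => Hs.
  by [].
move=> /eqP <-; rewrite take_size_cat ?eqxx //.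
Qed.

Lemma star_cat (b : addr) cs x gs e : star (b :: cs) (x :: gs) (b ++ e) = x e.
Proof. by rewrite /star /= prefix_cat drop_size_cat. Qed.

Lemma star_np (b : addr) cs x gs d :
  ~~ prefix b d -> star (b :: cs) (x :: gs) d = star cs gs d.
Proof. by move=> H; rewrite /star /= (negbTE H). Qed.

Lemma star_none cs gs d :
  (forall c, c \in cs -> ~~ prefix c d) -> star cs gs d = None.
Proof.
elim: cs gs => [|c cs IH] [|g gs] H //=.
rewrite /star /= (negbTE (H c (mem_head _ _))); apply: IH => c' Hc'.
by apply: H; rewrite in_cons Hc' orbT.
Qed.

Definition einv (al : blueprint) (a : addr) (phi : formula) (be : blueprint) :=
 [/\ al a = Some (SForm phi),
     forall e, e <> [::] -> al (a ++ e) = None,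
     forall d k e, a = d ++ k :: e -> al d <> None ->
        k = 2 /\ exists psi, al d = Some (SApp psi),
     forall d, ~~ prefix d a -> be d = al d &
     forall d, prefix d a -> be d = None].

Lemma extr_einv al a phi be : extr al a phi be -> einv al a phi be.
Proof.
elim=> {al a phi be}.
- move=> phi; split => //.
  + by case.
  + by move=> [|? ?] k e.
  + by case=> //; rewrite /prefix.
- move=> psi ga al a phi be _ _ _ _ [H1 H2 H3 H4 H5]; split.
  + by [].
  + by move=> e /H2.
  + case=> [|k0 d] k e /=.
      by case=> -> _ _; split=> //; exists psi.
    by case=> <- Ha Hd; apply: (H3 d k e Ha Hd).
  + case=> [|k d] //=.
    case: k => [|[|[|k]]] //=; rewrite /star /= /prefix /= ?take0 ?drop0 //.
    by rewrite eqseq_cons eqxx /= => Hp; rewrite H4.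
  + case=> [|k d] /=.
      by move=> _; rewrite /star /= /prefix.
    rewrite /prefix /= eqseq_cons => /andP[/eqP <- Hp].
    by rewrite /star /= /prefix /= take0 drop0 /= H5.
- move=> al a phi be b cs gs _ [H1 H2 H3 H4 H5] Hb Hbok Hcs Hsz Hpw Hgs.
  have Hinc : forall c, c \in cs -> incomparable b c.
    by move=> c Hc; move: Hpw => /= /andP[/allP H _]; apply: H.
  have Hnone : forall d, prefix d b -> ~~ prefix b d ->
      star (b :: cs) (al :: gs) d = None /\ star (b :: cs) (be :: gs) d = None.
    move=> d Hdb Hbd; rewrite !star_np //; split; apply: star_none => c Hc;
    apply/negP => Hcd; move: (Hinc c Hc) => /andP[_ /negP]; apply;
    exact: prefix_trans Hcd Hdb.
  split.
  + by rewrite star_cat.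
  + by move=> e He; rewrite -catA star_cat H2.
  + move=> d k e Hde Hd.
    case Hbd: (prefix b d).
      move: Hbd Hd => /prefixP[d' Hd']; subst d; rewrite star_cat => Hd.
      rewrite -catA in Hde; have Ha := catIl Hde.
      by have [-> [psi Hpsi]] := H3 _ _ _ Ha Hd; split=> //; exists psi.
    have Hdb : prefix d b.
      apply: prefix_split (negbT Hbd); apply/prefixP; exists (k :: e).
      by rewrite -Hde.
    by case: (Hnone d Hdb (negbT Hbd)) => Hn _; rewrite Hn in Hd.
  + move=> d Hd; case Hbd: (prefix b d).
      move: Hbd Hd => /prefixP[d' ->] Hd; rewrite !star_cat H4 //.
      by apply: contra Hd => /prefixP[e ->]; rewrite catA prefix_cat.
    by rewrite !star_np ?Hbd.
  + move=> d Hd; case Hbd: (prefix b d).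
      move: Hbd Hd => /prefixP[d' ->] Hd; rewrite star_cat H5 //.
      by move: Hd => /prefixP[e]; rewrite -catA => /catIl ->; apply: prefix_cat.
    by case: (Hnone d (prefix_split Hd (negbT Hbd)) (negbT Hbd)).
- move=> al al' a phi be be' _ [H1 H2 H3 H4 H5] Hal Hbe; split.
  + by rewrite -Hal.
  + by move=> e /H2; rewrite Hal.
  + move=> d k e Ha; rewrite -Hal => Hd; have [-> [psi Hp]] := H3 d k e Ha Hd.
    by split=> //; exists psi.
  + by move=> d Hd; rewrite -Hal -Hbe H4.
  + by move=> d Hd; rewrite -Hbe H5.
Qed.


Definition feqb (a b : formula) : bool := if formula_eq_dec a b then true else false.
Lemma feqP : Equality.axiom feqb.
Proof. by move=> a b; rewrite /feqb; case: formula_eq_dec => H; constructor. Qed.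
HB.instance Definition _ := hasDecEq.Build formula feqP.

Lemma einv_sub al a phi be d : einv al a phi be -> be d <> None -> al d = be d.
Proof.
case=> _ _ _ H4 H5; case Hp: (prefix d a).
  by rewrite H5.
by rewrite H4 ?Hp.
Qed.

Lemma chain_CF1 al s ga : extr_chain al s ga ->
  forall a phi, (a, phi) \in s -> al a = Some (SForm phi).
Proof.
elim=> {al s ga} // al a0 phi0 be s ga /extr_einv Hinv _ IH a phi.
rewrite in_cons => /orP[/eqP [-> ->]|Hin].
  by case: Hinv.
have Hb := IH _ _ Hin; rewrite (einv_sub Hinv) ?Hb //.
Qed.

Lemma chain_CF2 al s ga : extr_chain al s ga -> uniq (map fst s).
Proof.
elim=> {al s ga} // al a0 phi0 be s ga /extr_einv Hinv Hch IH /=.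
rewrite IH andbT; apply/negP => /mapP[[a phi] Hin /= Ha].
have Hn : be a0 = None by case: Hinv => _ _ _ _ H5; apply: H5; rewrite /prefix take_size eqxx.
by have := chain_CF1 Hch Hin; rewrite -Ha Hn.
Qed.

Lemma chain_CF3 al s : extr_chain al s bp_empty ->
  forall d phi, al d = Some (SForm phi) -> (d, phi) \in s.
Proof.
move Eg: bp_empty => ga H; elim: H Eg => {al s ga} [al <- //|].
move=> al a0 phi0 be s ga /extr_einv Hinv _ IH Eg d phi Hd.
case: Hinv => H1 H2 H3 H4 H5.
case Hp: (prefix d a0).
  move: Hp => /prefixP[[|k e] Ha].
    by move: Ha H1; rewrite cats0 => -> ; rewrite Hd => -[->]; apply: mem_head.
  have Hd' : al d <> None by rewrite Hd.
  by have [_ [psi]] := H3 d k e Ha Hd'; rewrite Hd.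
by rewrite in_cons IH ?orbT // H4 ?Hp.
Qed.

Lemma chain_CF4 al s ga : extr_chain al s ga ->
  forall s1 a phi s2, s = s1 ++ (a, phi) :: s2 ->
  forall c r, a = c ++ 1 :: r -> al c <> None ->
  exists r' phi', (c ++ 2 :: r', phi') \in s1.
Proof.
elim=> {al s ga} [al [] //|].
move=> al a0 phi0 be s ga /extr_einv Hinv Hch IH [|x s1] a phi s2 /=.
  case=> <- _ _ c r Ha Hc; case: Hinv => _ _ H3 _ _.
  by have [] := H3 c 1 r Ha Hc.
case=> Hx Hs c r Ha Hc; subst x.
case: (Hinv) => H1 H2 H3 H4 H5.
case Hp: (prefix c a0).
  move: Hp => /prefixP[[|k e] Ha0].
    have Hin : (a, phi) \in s by rewrite Hs mem_cat mem_head orbT.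
    have := chain_CF1 Hch Hin; rewrite -(einv_sub Hinv (d := a)).
      by rewrite Ha; move: Ha0; rewrite cats0 => <-; rewrite H2.
    by rewrite (chain_CF1 Hch Hin).
  have [Hk _] := H3 c k e Ha0 Hc; subst k.
  by exists e, phi0; rewrite -Ha0 mem_head.
have Hbc : be c <> None by rewrite H4 ?Hp.
have [r' [phi' Hin]] := IH s1 a phi s2 Hs c r Ha Hbc.
by exists r', phi'; rewrite in_cons Hin orbT.
Qed.


Lemma steps_cons l bs om oms :
  steps (l :: bs) (om :: oms) = steps bs oms ++ [seq (b, om) | b <- l].
Proof. by rewrite /steps /= rev_cons flatten_rcons. Qed.


Lemma steps_memA bs oms b phi : size bs = size oms ->
  (b, phi) \in steps bs oms ->
  exists i, [/\ i < size bs, b \in nth [::] bs i & phi = nth (Atom 0) oms i].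
Proof.
elim: bs oms => [|l bs IH] [|om oms] //= [Hs].
rewrite steps_cons mem_cat => /orP[/(IH _ Hs)[i [Hi Hb Hp]]|].
  by exists i.+1.
by move=> /mapP[b' Hb' [-> ->]]; exists 0.
Qed.

Lemma steps_memB bs oms i b : size bs = size oms -> i < size bs ->
  b \in nth [::] bs i -> (b, nth (Atom 0) oms i) \in steps bs oms.
Proof.
elim: bs oms i => [|l bs IH] [|om oms] //= [|i] [Hs] Hi Hb;
  rewrite steps_cons mem_cat.
  by apply/orP; right; apply/mapP; exists b.
by rewrite /= IH.
Qed.

Lemma steps_disj bs oms i j b : size bs = size oms ->
  uniq (map fst (steps bs oms)) -> i < size bs -> j < size bs ->
  b \in nth [::] bs i -> b \in nth [::] bs j -> i = j.
Proof.
move=> Hs Hu Hi Hj Hbi Hbj.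
have Hin : forall k, k < size bs -> b \in nth [::] bs k -> b \in map fst (steps bs oms) ->
   (count_mem b (map fst (steps bs oms)) = 1).
  by move=> k _ _ H; rewrite count_uniq_mem // H.
elim: bs oms Hs Hu i j Hi Hj Hbi Hbj {Hin} => [|l bs IH] [|om oms] //= [Hs].
rewrite steps_cons map_cat cat_uniq => /and3P[Hu1 Hd Hu2] [|i] [|j] //= Hi Hj Hbi Hbj.
- case/negP: Hd; apply/hasP; exists b.
    by apply/mapP; exists (b, om) => //; apply/mapP; exists b.
  by apply/mapP; exists (b, nth (Atom 0) oms j) => //; apply: steps_memB.
- case/negP: Hd; apply/hasP; exists b.
    by apply/mapP; exists (b, om) => //; apply/mapP; exists b.
  by apply/mapP; exists (b, nth (Atom 0) oms i) => //; apply: steps_memB.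
- by congr S; apply: (IH oms).
Qed.

Lemma mem_split (T : eqType) (x : T) s : x \in s -> exists s1 s2, s = s1 ++ x :: s2.
Proof. by case/splitPr => s1 s2; exists s1, s2. Qed.

Lemma steps_split bs oms i b : size bs = size oms -> i < size bs ->
  b \in nth [::] bs i ->
  exists s1 s2, steps bs oms = s1 ++ (b, nth (Atom 0) oms i) :: s2 /\
    forall x, x \in s1 -> exists j, [/\ i <= j, j < size bs & x.1 \in nth [::] bs j].
Proof.
elim: bs oms i => [|l bs IH] [|om oms] //= [|i] [Hs] Hi Hb.
- have : (b, om) \in [seq (b, om) | b <- l] by apply/mapP; exists b.
  case/mem_split => s1 [s2 Heq].
  exists (steps bs oms ++ s1), s2; split.
    by rewrite steps_cons Heq catA.
  move=> [x1 x2]; rewrite mem_cat => /orP[Hx|Hx].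
    have [k [Hk Hxk _]] := steps_memA Hs Hx.
    by exists k.+1.
  exists 0; split => //=.
  have : (x1, x2) \in [seq (b, om) | b <- l] by rewrite Heq mem_cat Hx.
  by case/mapP => b' Hb' [->].
- have [s1 [s2 [Heq Hs1]]] := IH oms i Hs Hi Hb.
  exists s1, (s2 ++ [seq (b, om) | b <- l]); split.
    by rewrite steps_cons Heq -catA.
  move=> x /Hs1[j [Hij Hj Hx]]; by exists j.+1.
Qed.


Lemma subterm_cat (X : Type) (M : term X) d e :
  subterm M (d ++ e) = obind (fun S => subterm S e) (subterm M d).
Proof.
elim: d M => [|k d IH] [x|x P|P Q] //=.
- by case: (k == 1).
- by case: (k == 1) => //; case: (k == 2).
Qed.

Lemma FV_sub (X : eqType) (M : term X) a S x : subterm M a = Some S ->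
  x \in FV S -> (x \in FV M) || (x \in BV M).
Proof.
elim: M a => [y|y P IH|P IHP Q IHQ] [|k a] //=.
- by move=> [<-] ->.
- by move=> [<-] ->.
- case: (k == 1) => // /IH H /H; rewrite mem_filter in_cons.
  by case: (x == y); rewrite ?orbT //= andbT.
- by move=> [<-] ->.
- rewrite !mem_cat; case: (k == 1).
    by move=> /IHP H /H /orP[] ->; rewrite ?orbT.
  case: (k == 2) => // /IHQ H /H /orP[] ->; by rewrite ?orbT.
Qed.

Lemma BV_sub (X : eqType) (M : term X) a S x : subterm M a = Some S ->
  x \in BV S -> x \in BV M.
Proof.
elim: M a => [y|y P IH|P IHP Q IHQ] [|k a] //=.
- by move=> [<-].
- by move=> [<-].
- by case: (k == 1) => // /IH H /H; rewrite in_cons => ->; rewrite orbT.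
- by move=> [<-].
- rewrite !mem_cat; case: (k == 1).
    by move=> /IHP H /H ->.
  by case: (k == 2) => // /IHQ H /H ->; rewrite orbT.
Qed.

Lemma occ_FV (X : eqType) (S : term X) q x : subterm S q = Some (Var x) ->
  x \notin BV S -> x \in FV S.
Proof.
elim: S q => [y|y P IH|P IHP Q IHQ] [|k q] //=.
- by move=> [->]; rewrite mem_head.
- case: (k == 1) => // /IH H; rewrite in_cons negb_or => /andP[Hxy /H].
  by rewrite mem_filter Hxy.
- rewrite !mem_cat negb_or; case: (k == 1).
    by move=> /IHP H /andP[/H ->].
  by case: (k == 2) => // /IHQ H /andP[_ /H ->]; rewrite orbT.
Qed.

Lemma FV_occ (X : eqType) (S : term X) x : x \in FV S ->
  exists q, subterm S q = Some (Var x).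
Proof.
elim: S => [y|y P IH|P IHP Q IHQ] /=.
- by rewrite in_cons orbF => /eqP ->; exists [::].
- by rewrite mem_filter => /andP[_ /IH[q Hq]]; exists (1 :: q).
- rewrite mem_cat => /orP[/IHP[q Hq]|/IHQ[q Hq]].
    by exists (1 :: q).
  by exists (2 :: q).
Qed.

Lemma wf_lam (X : eqType) (x : X) P : wf_term (Lam x P) -> wf_term P.
Proof.
rewrite /wf_term /= => /andP[/andP[Hx Hu] /allP H]; rewrite Hu /=.
apply/allP => y Hy; case: (eqVneq y x) => [->//|Hyx].
have := H y; rewrite mem_filter Hyx Hy in_cons negb_or => /(_ isT) /andP[_ ->].
by [].
Qed.

Lemma wf_appl (X : eqType) (P Q : term X) : wf_term (App P Q) -> wf_term P.
Proof.
rewrite /wf_term /= cat_uniq => /andP[/and3P[Hu _ _] /allP H]; rewrite Hu /=.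
apply/allP => y Hy; have := H y; rewrite !mem_cat Hy negb_or => /(_ isT) /andP[-> _].
by [].
Qed.

Lemma wf_appr (X : eqType) (P Q : term X) : wf_term (App P Q) -> wf_term Q.
Proof.
rewrite /wf_term /= cat_uniq => /andP[/and3P[_ _ Hu] /allP H]; rewrite Hu /=.
apply/allP => y Hy; have := H y; rewrite !mem_cat Hy orbT negb_or => /(_ isT) /andP[_ ->].
by [].
Qed.

Lemma has_type_tyof (X : eqType) O Om (S : term X) tau :
  has_type O Om S tau -> tyof Om S = Some tau.
Proof.
elim=> {S tau} //=.
- by move=> x P psi _ ->.
- move=> P Q chi psi _ -> _ -> _.
  by case: formula_eq_dec.
Qed.

Lemma has_type_HRM (X : eqType) O Om (S : term X) tau :
  has_type O Om S tau -> HRM O S.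
Proof. by case=> // *; constructor. Qed.

Lemma has_type_sub (X : eqType) O Om (M : term X) tau a S :
  has_type O Om M tau -> subterm M a = Some S -> exists tau', has_type O Om S tau'.
Proof.
elim: a M tau => [|k a IH] M tau H /=.
  by case: M H => [x|x P|P Q] H /= [<-]; exists tau.
case: M H => [x|x P|P Q] H //=.
- inversion H; subst; case: (k == 1) => //; eapply IH; eassumption.
- inversion H; subst; case: (k == 1); first (eapply IH; eassumption).
  case: (k == 2) => //; eapply IH; eassumption.
Qed.

Lemma HRM_lam (X : eqType) O (x : X) P : HRM O (Lam x P) ->
  [/\ HRM O P, x \in FV P & forall y, y \in FV P -> O y <= O x].
Proof. by move=> H; inversion H; subst. Qed.

Lemma HRM_app (X : eqType) O (P Q : term X) : HRM O (App P Q) ->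
  [/\ HRM O P, HRM O Q & forall y, y \in FV P -> exists2 z, z \in FV Q & O y <= O z].
Proof. by move=> H; inversion H; subst. Qed.

Lemma lemA (X : eqType) O (HO : injective O) (M : term X) :
  wf_term M -> HRM O M -> forall a S w u, subterm M a = Some S ->
  w \in FV S -> w \in BV M -> u \in FV S -> u \notin BV M -> O u < O w.
Proof.
move=> Hwf HM a; elim: M a Hwf HM => [y|y P IH|P IHP Q IHQ] [|k a] Hwf HM S w u //=;
  try (move=> [<-] Hw Hb; move: Hwf => /andP[_ /allP /(_ w Hw)]; rewrite Hb //).
- case: ifP => // _ HS Hw; rewrite in_cons => Hb Hu; rewrite in_cons negb_or => /andP[Huy HuB].
  have [HP HyP Hmax] := HRM_lam HM.
  case/orP: Hb => [/eqP Hwy|HwB].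
    subst w; have := FV_sub HS Hu; rewrite (negbTE HuB) orbF => /Hmax.
    rewrite leq_eqVlt => /orP[/eqP /HO Heq|//]; by rewrite Heq eqxx in Huy.
  exact: (IH a (wf_lam Hwf) HP S w u HS Hw HwB Hu HuB).
- have [HP HQ _] := HRM_app HM.
  have Hwf' := Hwf; move: Hwf' => /andP[_ /allP Hdis].
  rewrite !mem_cat !negb_or => + + + + /andP[HuP HuQ].
  case: ifP => _.
    move=> HS Hw Hb Hu; have := FV_sub HS Hw; case/orP => [HwF|HwB].
      by have := Hdis w; rewrite mem_cat HwF mem_cat Hb => /(_ isT).
    exact: (IHP a (wf_appl Hwf) HP S w u HS Hw HwB Hu HuP).
  case: ifP => // _.
  move=> HS Hw Hb Hu; have := FV_sub HS Hw; case/orP => [HwF|HwB].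
    by have := Hdis w; rewrite mem_cat HwF orbT mem_cat Hb => /(_ isT).
  exact: (IHQ a (wf_appr Hwf) HQ S w u HS Hw HwB Hu HuQ).
Qed.


Fixpoint Tr (X : eqType) (sg : X -> X) (f : addr -> X) (bvm : seq X)
   (p : addr) (S : term X) : term X :=
  match S with
  | Var x => if x \in bvm then Var (sg x) else Var (f p)
  | Lam x P => Lam (sg x) (Tr sg f bvm (rcons p 1) P)
  | App P Q => App (Tr sg f bvm (rcons p 1) P) (Tr sg f bvm (rcons p 2) Q)
  end.

Lemma Tr_sub (X : eqType) sg f bvm (S : term X) p q :
  subterm (Tr sg f bvm p S) q = omap (Tr sg f bvm (p ++ q)) (subterm S q).
Proof.
elim: S p q => [x|x P IH|P IHP Q IHQ] p [|k q] /=; rewrite ?cats0 //;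
  try by case: (x \in bvm).
- by case: eqP => // ->; rewrite IH cat_rcons.
- case: eqP => [->|_]; first by rewrite IHP cat_rcons.
  by case: eqP => // ->; rewrite IHQ cat_rcons.
Qed.

Lemma Tr_BV (X : eqType) sg f bvm (S : term X) p :
  BV (Tr sg f bvm p S) = map sg (BV S).
Proof.
elim: S p => [x|x P IH|P IHP Q IHQ] p /=.
- by case: (x \in bvm).
- by rewrite IH.
- by rewrite IHP IHQ map_cat.
Qed.

Lemma FVT1 (X : eqType) sg f bvm (S : term X) p w :
  {in bvm &, injective sg} -> all (fun y => y \in bvm) (BV S) ->
  w \in FV S -> w \in bvm -> sg w \in FV (Tr sg f bvm p S).
Proof.
move=> Hinj; elim: S p => [x|x P IH|P IHP Q IHQ] p /=.
- by move=> _; rewrite in_cons orbF => /eqP -> ->; rewrite mem_head.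
- move=> /andP[Hx HB]; rewrite !mem_filter => /andP[Hwx Hw] Hwb.
  rewrite IH // andbT; apply: contra Hwx => /eqP /Hinj -> //.
- rewrite all_cat !mem_cat => /andP[HP HQ] /orP[Hw|Hw] Hwb.
    by rewrite IHP.
  by rewrite IHQ ?orbT.
Qed.

Lemma FVT2 (X : eqType) sg f bvm (S : term X) p z :
  z \in FV (Tr sg f bvm p S) ->
  (exists w, [/\ w \in FV S, w \in bvm & z = sg w]) \/
  (exists q x, [/\ subterm S q = Some (Var x), x \notin bvm & z = f (p ++ q)]).
Proof.
elim: S p => [x|x P IH|P IHP Q IHQ] p /=.
- case: ifP => Hx; rewrite in_cons orbF => /eqP ->.
    by left; exists x; rewrite mem_head.
  by right; exists [::], x; rewrite cats0 Hx.
- rewrite mem_filter => /andP[Hzx /IH[[w [Hw Hwb Hz]]|[q [y [Hq Hy ->]]]]].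
    left; exists w; split=> //; rewrite mem_filter Hw andbT.
    by apply: contra Hzx => /eqP Hwx; rewrite Hz Hwx.
  by right; exists (1 :: q), y; rewrite /= Hq Hy cat_rcons.
- rewrite mem_cat => /orP[/IHP|/IHQ].
    case=> [[w [Hw Hwb ->]]|[q [y [Hq Hy ->]]]].
      by left; exists w; rewrite mem_cat Hw.
    by right; exists (1 :: q), y; rewrite /= Hq Hy cat_rcons.
  case=> [[w [Hw Hwb ->]]|[q [y [Hq Hy ->]]]].
    by left; exists w; rewrite mem_cat Hw orbT.
  by right; exists (2 :: q), y; rewrite /= Hq Hy cat_rcons.
Qed.

Lemma FVT3 (X : eqType) sg f bvm (S : term X) p q x :
  (forall y b, y \in bvm -> sg y != f b) -> all (fun y => y \in bvm) (BV S) ->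
  subterm S q = Some (Var x) -> x \notin bvm -> f (p ++ q) \in FV (Tr sg f bvm p S).
Proof.
move=> Hsep; elim: S p q => [y|y P IH|P IHP Q IHQ] p [|k q] //=.
- by move=> _ [->] /negbTE ->; rewrite cats0 mem_head.
- move=> /andP[Hy HB]; case: ifP => // /eqP -> Hq Hx.
  rewrite mem_filter -cat_rcons IH // andbT eq_sym; exact: Hsep.
- rewrite all_cat => /andP[HP HQ]; case: ifP => [/eqP -> Hq Hx|_].
    by rewrite mem_cat -cat_rcons IHP.
  case: ifP => // /eqP -> Hq Hx.
  by rewrite mem_cat -cat_rcons IHQ ?orbT.
Qed.

Lemma tyofT (X : eqType) sg f bvm Om (S : term X) p :
  (forall x, x \in bvm -> Om (sg x) = Om x) -> all (fun y => y \in bvm) (BV S) ->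
  (forall q x, subterm S q = Some (Var x) -> x \notin bvm -> Om (f (p ++ q)) = Om x) ->
  tyof Om (Tr sg f bvm p S) = tyof Om S.
Proof.
move=> Hsg; elim: S p => [x|x P IH|P IHP Q IHQ] p /=.
- move=> _ Hf; case: ifP => Hx /=; first by rewrite Hsg.
  by rewrite -(Hf [::] x) ?cats0 ?Hx.
- move=> /andP[Hx HB] Hf; rewrite Hsg // IH // => q y Hq Hy.
  by rewrite cat_rcons; apply: (Hf (1 :: q)).
- rewrite all_cat => /andP[HP HQ] Hf; rewrite IHP ?IHQ //.
    by move=> q y Hq Hy; rewrite cat_rcons; apply: (Hf (2 :: q)).
  by move=> q y Hq Hy; rewrite cat_rcons; apply: (Hf (1 :: q)).
Qed.


Definition THyps (X : eqType) (O : X -> nat) (M : term X) (sg : X -> X)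
  (f : addr -> X) (base : nat) : Prop :=
  [/\ injective O /\ HRM O M, wf_term M,
      forall x, x \in BV M -> base < O (sg x),
      forall b, O (f b) <= base &
      forall x z, x \in BV M -> z \in BV M -> O x < O z -> O (sg x) < O (sg z)].

Definition TOrd (X : eqType) (O : X -> nat) (M : term X) (f : addr -> X) : Prop :=
  forall c P Q, subterm M c = Some (App P Q) ->
  all (fun v => v \notin BV M) (FV (App P Q)) ->
  forall r x, subterm P r = Some (Var x) -> x \notin BV M ->
  exists r' u, [/\ subterm Q r' = Some (Var u), u \notin BV M &
                   O (f (c ++ 1 :: r)) <= O (f (c ++ 2 :: r'))].


Lemma THyps_inj X O M sg f base : @THyps X O M sg f base -> {in BV M &, injective sg}.
Proof.
case=> [[HO _]] _ _ _ Hm x z Hx Hz Heq; apply: HO; apply/eqP; case: ltngtP => // H.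
- by have := Hm _ _ Hx Hz H; rewrite Heq ltnn.
- by have := Hm _ _ Hz Hx H; rewrite Heq ltnn.
Qed.

Lemma THyps_le X O M sg f base : @THyps X O M sg f base ->
  forall x z, x \in BV M -> z \in BV M -> O x <= O z -> O (sg x) <= O (sg z).
Proof.
case=> [[HO _]] _ _ _ Hm x z Hx Hz; rewrite leq_eqVlt => /orP[/eqP /HO ->//|H].
exact: ltnW (Hm _ _ Hx Hz H).
Qed.

Lemma THyps_sep X O M sg f base : @THyps X O M sg f base ->
  forall y b, y \in BV M -> sg y != f b.
Proof.
case=> _ _ Hs Hf _ y b Hy; apply/eqP => Heq.
by have := leq_ltn_trans (Hf b) (Hs y Hy); rewrite Heq ltnn.
Qed.

Lemma subterm_nil (X : Type) (S : term X) : subterm S [::] = Some S.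
Proof. by case: S. Qed.

Lemma sub_rcons (X : Type) (M : term X) p S k S' :
  subterm M p = Some S -> subterm S [:: k] = Some S' -> subterm M (rcons p k) = Some S'.
Proof. by move=> H1 H2; rewrite -cats1 subterm_cat H1. Qed.

Lemma BV_all (X : eqType) (M : term X) p S :
  subterm M p = Some S -> all (fun y => y \in BV M) (BV S).
Proof. by move=> H; apply/allP => y; apply: BV_sub H. Qed.

Lemma HRM_T X O M sg f base : @THyps X O M sg f base -> TOrd O M f ->
  forall S p, subterm M p = Some S -> HRM O S -> HRM O (Tr sg f (BV M) p S).
Proof.
move=> Hh Hord; have Hinj := THyps_inj Hh; have Hle := THyps_le Hh.
have Hsep := THyps_sep Hh; case: (Hh) => [[HO HMM]] Hwf Hsb Hfb Hm.
elim=> [x|x P IH|P IHP Q IHQ] p HS HM /=.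
- by case: ifP => _; constructor.
- have [HP HxP Hmax] := HRM_lam HM.
  have := BV_all HS; rewrite /= => /andP[Hxb HBP].
  have HSP : subterm M (rcons p 1) = Some P by apply: (sub_rcons HS); rewrite /= subterm_nil.
  constructor; first exact: IH.
    exact: FVT1.
  move=> y /FVT2[[w [Hw Hwb ->]]|[q [z [Hq Hz ->]]]].
    by apply: Hle => //; apply: Hmax.
  exact: ltnW (leq_ltn_trans (Hfb _) (Hsb _ Hxb)).
- have [HP HQ Hc] := HRM_app HM.
  have := BV_all HS; rewrite /= all_cat => /andP[HBP HBQ].
  have HSP : subterm M (rcons p 1) = Some P by apply: (sub_rcons HS); rewrite /= subterm_nil.
  have HSQ : subterm M (rcons p 2) = Some Q by apply: (sub_rcons HS); rewrite /= subterm_nil.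
  have HA : forall w u, w \in FV P -> w \in BV M -> u \in FV Q -> u \notin BV M ->
      O w <= O u -> False.
    move=> w u Hw Hwb Hu Hub Hwu.
    have := lemA HO Hwf HMM HS (w := w) (u := u); rewrite /= !mem_cat Hw Hu orbT.
    by move=> /(_ isT Hwb isT Hub); rewrite ltnNge Hwu.
  constructor; [exact: IHP | exact: IHQ |].
  move=> y /FVT2[[w [Hw Hwb ->]]|[q [z [Hq Hz ->]]]].
    have [u Hu Hwu] := Hc w Hw.
    case Hub: (u \in BV M).
      by exists (sg u); [apply: FVT1 | apply: Hle].
    by case: (HA w u Hw Hwb Hu (negbT Hub) Hwu).
  case Hhas: (has (fun v => v \in BV M) (FV Q)).
    case/hasP: Hhas => w Hw Hwb; exists (sg w); first exact: FVT1.
    exact: ltnW (leq_ltn_trans (Hfb _) (Hsb _ Hwb)).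
  have HQn : all (fun v => v \notin BV M) (FV Q).
    by apply/allP => v Hv; apply/negP => Hvb; move/negP: Hhas; apply; apply/hasP; exists v.
  have HPn : all (fun v => v \notin BV M) (FV P).
    apply/allP => v Hv; apply/negP => Hvb.
    have [u Hu Hvu] := Hc v Hv.
    by apply: (HA v u Hv Hvb Hu _ Hvu); move/allP: HQn; apply.
  have Hst : all (fun v => v \notin BV M) (FV (App P Q)) by rewrite /= all_cat HPn HQn.
  have [r' [u [Hr' Hu Hle']]] := Hord p P Q HS Hst q z Hq Hz.
  exists (f (p ++ 2 :: r')).
    by rewrite -cat_rcons; apply: (@FVT3 _ _ _ _ _ _ _ u).
  by rewrite cat_rcons.
Qed.

Lemma type_T X O Om M sg f base : @THyps X O M sg f base -> TOrd O M f ->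
  (forall x, x \in BV M -> Om (sg x) = Om x) ->
  (forall q x, subterm M q = Some (Var x) -> x \notin BV M -> Om (f q) = Om x) ->
  forall S tau, has_type O Om S tau ->
  forall p, subterm M p = Some S -> has_type O Om (Tr sg f (BV M) p S) tau.
Proof.
move=> Hh Hord HOs HOf S tau; elim=> {S tau}.
- move=> x p HS /=; case: ifP => Hx.
    by rewrite -HOs //; constructor.
  by rewrite -(HOf p x HS) ?Hx //; constructor.
- move=> x P psi HP IH HL p HS /=.
  have := BV_all HS; rewrite /= => /andP[Hxb _].
  have HSP : subterm M (rcons p 1) = Some P by apply: (sub_rcons HS); rewrite /= subterm_nil.
  rewrite -HOs //; constructor; first exact: IH.
  exact: (HRM_T Hh Hord HS HL).
- move=> P Q chi psi HP IHP HQ IHQ HA p HS /=.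
  have HSP : subterm M (rcons p 1) = Some P by apply: (sub_rcons HS); rewrite /= subterm_nil.
  have HSQ : subterm M (rcons p 2) = Some Q by apply: (sub_rcons HS); rewrite /= subterm_nil.
  apply: ty_app; [exact: IHP | exact: IHQ |].
  exact: (HRM_T Hh Hord HS HA).
Qed.


Lemma many_vars (X : eqType) (Om : X -> formula)
  (HOm : forall (phi : formula) (s : seq X), exists x, Om x = phi /\ x \notin s) phi n :
  exists s : seq X, [/\ size s = n, uniq s & forall x, x \in s -> Om x = phi].
Proof.
elim: n => [|n [s [Hs Hu Hp]]]; first by exists [::].
have [x [Hx Hxs]] := HOm phi s.
exists (x :: s); split => //=; first by rewrite Hs.
  by rewrite Hxs.
by move=> y; rewrite in_cons => /orP[/eqP ->|/Hp].
Qed.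

Lemma pick_big (X : eqType) (O : X -> nat) (Om : X -> formula) (HO : injective O)
  (HOm : forall (phi : formula) (s : seq X), exists x, Om x = phi /\ x \notin s) phi K :
  exists x, Om x = phi /\ K < O x.
Proof.
have [s [Hs Hu Hp]] := many_vars HOm phi K.+2.
case Hh: (has (fun x => K < O x) s).
  by case/hasP: Hh => x Hx HK; exists x; split => //; apply: Hp.
have Hsub : {subset map O s <= iota 0 K.+1}.
  move=> n /mapP[x Hx ->]; rewrite mem_iota /= add0n ltnS.
  by rewrite leqNgt; apply/negP => H; move/negP: Hh; apply; apply/hasP; exists x.
have := uniq_leq_size (s1 := map O s) _ Hsub.
by rewrite map_inj_uniq // Hu size_map size_iota Hs ltnn => /(_ isT).
Qed.

Definition maxO (X : Type) (g : X -> nat) (l : seq X) := foldr (fun x m => maxn (g x) m) 0 l.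

Lemma maxO_ge (X : eqType) (g : X -> nat) l x : x \in l -> g x <= maxO g l.
Proof.
elim: l => [|y l IH] //=; rewrite in_cons => /orP[/eqP ->|/IH H].
  exact: leq_maxl.
exact: leq_trans H (leq_maxr _ _).
Qed.

Lemma exists_max (X : eqType) (O : X -> nat) (l : seq X) : l != [::] ->
  exists2 m, m \in l & forall x, x \in l -> O x <= O m.
Proof.
elim: l => [|y l IH] // _; case: l IH => [|z l] IH.
  by exists y => [|x]; rewrite ?mem_head // in_cons orbF => /eqP ->.
have [m Hm Hmax] := IH isT.
case: (leqP (O y) (O m)) => Hym.
  exists m; first by rewrite in_cons Hm orbT.
  by move=> x; rewrite in_cons => /orP[/eqP ->//|/Hmax].
exists y; first by rewrite mem_head.
move=> x; rewrite in_cons => /orP[/eqP ->//|/Hmax H].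
exact: leq_trans H (ltnW Hym).
Qed.

Lemma sg_exists (X : eqType) (O : X -> nat) (Om : X -> formula) (HO : injective O)
  (HOm : forall (phi : formula) (s : seq X), exists x, Om x = phi /\ x \notin s)
  (l : seq X) base :
  exists sg : X -> X,
    (forall x, x \in l -> Om (sg x) = Om x /\ base < O (sg x)) /\
    (forall x z, x \in l -> z \in l -> O x < O z -> O (sg x) < O (sg z)).
Proof.
move: {2}(size l) (leqnn (size l)) => n; elim: n l => [|n IH] l Hl.
  by case: l Hl => // _; exists id.
case: (eqVneq l [::]) => [->|Hne]; first by exists id.
have [m Hm Hmax] := exists_max O Hne.
set l' := filter (predC1 m) l.
have Hl' : size l' <= n.
  have Hlt : size l' < size l.
    rewrite /l' size_filter -(count_predC (predC1 m) l) -addn1 leq_add2l.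
    by rewrite -has_count; apply/hasP; exists m => //=; rewrite eqxx.
  exact: leq_trans Hlt Hl.
have [sg' [H1 H2]] := IH l' Hl'.
set K := maxn base (maxO (fun x => O (sg' x)) l').
have [v [Hv HK]] := pick_big HO HOm (Om m) K.
exists (fun x => if x == m then v else sg' x); split.
  move=> x Hx; case: eqP => [->|Hxm]; first by split => //; exact: leq_ltn_trans (leq_maxl _ _) HK.
  by apply: H1; rewrite /l' mem_filter /= Hx andbT; apply/eqP.
move=> x z Hx Hz Hxz.
case: eqP => [Hxm|Hxm].
  by subst x; have := Hmax z Hz; rewrite leqNgt Hxz.
have Hx' : x \in l' by rewrite /l' mem_filter /= Hx andbT; apply/eqP.
case: eqP => [Hzm|Hzm].
  apply: leq_ltn_trans HK; apply: leq_trans (leq_maxr _ _).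
  exact: (maxO_ge (fun x => O (sg' x)) Hx').
apply: H2 => //; by rewrite /l' mem_filter /= Hz andbT; apply/eqP.
Qed.


Lemma BP1 (X : eqType) (Om : X -> formula) (M : term X) d phi :
  bp_of_term Om M d = Some (SForm phi) ->
  exists x, [/\ subterm M d = Some (Var x), x \in FV M & phi = Om x].
Proof.
rewrite /bp_of_term; case: (subterm M d) => // S; case: ifP => // Hall.
case: S Hall => [x|x P|P Q] // Hall.
  by case=> <-; exists x; split => //; move: Hall => /= /andP[].
by case: (tyof Om (App P Q)).
Qed.

Lemma BP2 (X : eqType) (Om : X -> formula) (M : term X) d x :
  subterm M d = Some (Var x) -> x \in FV M -> bp_of_term Om M d = Some (SForm (Om x)).
Proof. by move=> H Hx; rewrite /bp_of_term H /= Hx. Qed.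

Lemma occ_FVM (X : eqType) (M : term X) q x :
  subterm M q = Some (Var x) -> x \notin BV M -> x \in FV M.
Proof.
move=> H Hx; have := FV_sub H (x := x); rewrite /= mem_head (negbTE Hx) orbF.
by apply.
Qed.

Lemma wf_disj (X : eqType) (M : term X) x : wf_term M -> x \in FV M -> x \notin BV M.
Proof. by case/andP => _ /allP H /H. Qed.

Lemma zip_mem (S T : eqType) (s : seq S) (t : seq T) x0 y0 x y :
  size s = size t -> (x, y) \in zip s t ->
  exists i, [/\ i < size s, x = nth x0 s i & y = nth y0 t i].
Proof.
move=> Hs Hin.
have Hi : index (x, y) (zip s t) < size s.
  by rewrite -[X in _ < X]minnn [X in minn _ X]Hs -size_zip index_mem.
have Hn := nth_index (x0, y0) Hin.
move: Hi Hn; move: (index (x, y) (zip s t)) => i Hi; rewrite nth_zip // => -[Hx Hy].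
by exists i; rewrite Hx Hy.
Qed.

Theorem lemma2p16 (X : eqType) (O : X -> nat) (Om : X -> formula)
  (HO : injective O)
  (HOm : forall (phi : formula) (s : seq X), exists x, Om x = phi /\ x \notin s)
  (M : term X) (bs : seq (seq addr)) (oms : seq formula) :
  Lambda_NF O Om M ->
  size bs = size oms ->
  all (fun l => l != [::]) bs ->
  extr_chain (bp_of_term Om M) (steps bs oms) bp_empty ->
  forall Y : seq X,
    sorted (fun x y => O x < O y) Y ->
    map Om Y = oms ->
    exists N : term X,
      wf_term N /\
      (forall a, subterm N a = None <-> subterm M a = None) /\
      bp_eq (bp_of_term Om N) (bp_of_term Om M) /\
      (forall tau, has_type O Om M tau -> has_type O Om N tau) /\
      free_seq O N Y /\
      (forall y bi, (y, bi) \in zip Y bs ->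
         forall b : addr, subterm N b = Some (Var y) <-> b \in bi).
Proof.
move=> [Hwf [[tau0 Hty] _]] Hsz Hne Hch Y Hsort HY.
have [y0 _] := HOm (Atom 0) [::].
have HMM : HRM O M := has_type_HRM Hty.
set base := maxO O (y0 :: Y).
have HYb : forall y, y \in y0 :: Y -> O y <= base by move=> y Hy; apply: maxO_ge.
have HYb' : forall y, y \in Y -> O y <= base.
  by move=> y Hy; apply: HYb; rewrite in_cons Hy orbT.
have [sg [Hsg1 Hsg2]] := sg_exists HO HOm (BV M) base.
set f := fun b : addr => nth y0 Y (find (fun l => b \in l) bs).
have HsY : size Y = size bs by rewrite -(size_map Om) HY Hsz.
have Hfb : forall b, O (f b) <= base.
  move=> b; apply: HYb; rewrite /f; case: (ltnP (find (fun l => b \in l) bs) (size Y)) => H.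
    by rewrite in_cons mem_nth ?orbT.
  by rewrite nth_default ?mem_head.
set al0 := bp_of_term Om M.
have Hu := chain_CF2 Hch.
have G1 : forall i b, i < size bs -> b \in nth [::] bs i ->
    al0 b = Some (SForm (nth (Atom 0) oms i)).
  by move=> i b Hi Hb; apply: (chain_CF1 Hch); apply: steps_memB.
have G2 : forall d phi, al0 d = Some (SForm phi) ->
    exists i, [/\ i < size bs, d \in nth [::] bs i & phi = nth (Atom 0) oms i].
  by move=> d phi /(chain_CF3 Hch); apply: steps_memA.
have G3 : forall i b, i < size bs -> b \in nth [::] bs i -> f b = nth y0 Y i.
  move=> i b Hi Hb; rewrite /f; congr nth.
  have Hhas : has (fun l => b \in l) bs.
    by apply/hasP; exists (nth [::] bs i) => //; apply: mem_nth.
  have Hk := Hhas; rewrite has_find in Hk.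
  apply: (steps_disj (b := b) Hsz Hu Hk Hi) => //; by have /= := nth_find [::] Hhas.
have Htr : transitive (fun x y : X => O x < O y).
  by move=> a b c /= H1 H2; apply: ltn_trans H1 H2.
have Ymono : forall i j, i <= j -> j < size Y -> O (nth y0 Y i) <= O (nth y0 Y j).
  move=> i j; rewrite leq_eqVlt => /orP[/eqP ->//|Hij] Hj.
  apply: ltnW; apply: (sorted_ltn_nth Htr y0 Hsort) => //; rewrite inE //.
  exact: ltn_trans Hij Hj.
have Hyu : uniq Y by apply: (sorted_uniq Htr _ Hsort) => x /=; rewrite ltnn.
have Yinj : forall i j, i < size Y -> j < size Y -> nth y0 Y i = nth y0 Y j -> i = j.
  by move=> i j Hi Hj /eqP; rewrite nth_uniq // => /eqP.
have YOm : forall i, i < size Y -> Om (nth y0 Y i) = nth (Atom 0) oms i.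
  by move=> i Hi; rewrite -HY (nth_map y0).
have FO : forall q x, subterm M q = Some (Var x) -> x \notin BV M ->
    exists i, [/\ i < size bs, q \in nth [::] bs i & Om x = nth (Atom 0) oms i].
  move=> q x Hq Hx; have := BP2 Om Hq (occ_FVM Hq Hx).
  by move/G2 => [i [Hi Hqi Hphi]]; exists i.
have HfOm : forall q x, subterm M q = Some (Var x) -> x \notin BV M -> Om (f q) = Om x.
  move=> q x Hq Hx; have [i [Hi Hqi HOx]] := FO q x Hq Hx.
  by rewrite (G3 i q Hi Hqi) YOm ?HsY // HOx.
have Hth : THyps O M sg f base.
  split => //; first by move=> x /Hsg1 [].
have HOs : forall x, x \in BV M -> Om (sg x) = Om x by move=> x /Hsg1[].
have G4 : forall i c r, i < size bs -> c ++ 1 :: r \in nth [::] bs i -> al0 c <> None ->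
    exists j r', [/\ i <= j, j < size bs & c ++ 2 :: r' \in nth [::] bs j].
  move=> i c r Hi Hin Hc; have [s1 [s2 [Hs Hs1]]] := steps_split Hsz Hi Hin.
  have [r' [phi' Hr']] := chain_CF4 Hch Hs (erefl _) Hc.
  by have [j [Hij Hj Hjin]] := Hs1 _ Hr'; exists j, r'.
have Hord : TOrd O M f.
  move=> c P Q HcS Hst r x HPr Hx.
  have Ha : subterm M (c ++ 1 :: r) = Some (Var x) by rewrite subterm_cat HcS.
  have [i [Hi Hai _]] := FO _ _ Ha Hx.
  have Hc : al0 c <> None.
    have [tau' Ht'] := has_type_sub Hty HcS.
    rewrite /al0 /bp_of_term HcS; case: ifP => [_|/negP []].
      by rewrite (has_type_tyof Ht').
    apply/allP => v Hv; have := FV_sub HcS Hv.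
    by move/allP: Hst => /(_ v Hv) /negbTE ->; rewrite orbF.
  have [j [r' [Hij Hj Hjin]]] := G4 i c r Hi Hai Hc.
  have [u [Hu' HuF _]] := BP1 (G1 j _ Hj Hjin).
  exists r', u; split.
  - by move: Hu'; rewrite subterm_cat HcS.
  - exact: wf_disj Hwf HuF.
  - rewrite (G3 i _ Hi Hai) (G3 j _ Hj Hjin); apply: Ymono => //; by rewrite HsY.
pose N := Tr sg f (BV M) [::] M.
have HN : forall a, subterm N a = omap (Tr sg f (BV M) a) (subterm M a).
  by move=> a; rewrite /N Tr_sub.
have HinjB := THyps_inj Hth; have HsepB := THyps_sep Hth.
have HBN : BV N = map sg (BV M) by rewrite /N Tr_BV.
have bigN : forall z, z \in BV N -> base < O z.
  by move=> z; rewrite HBN => /mapP[w Hw ->]; have [_ ] := Hsg1 w Hw.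
have FVN1 : forall z, z \in FV N -> z \in Y.
  move=> z /FVT2[[w [Hw Hwb _]]|[q [x [Hq Hx ->]]]].
    by have := wf_disj Hwf Hw; rewrite Hwb.
  rewrite cat0s; have [i [Hi Hqi _]] := FO q x Hq Hx.
  by rewrite (G3 i q Hi Hqi) mem_nth // HsY.
have FVN2 : forall y, y \in Y -> y \in FV N.
  move=> y Hy; have Hi : index y Y < size bs by rewrite -HsY index_mem.
  have Hne_i : nth [::] bs (index y Y) != [::] by move/allP: Hne; apply; apply: mem_nth.
  have [b Hb] : exists b, b \in nth [::] bs (index y Y).
    by case: (nth [::] bs (index y Y)) Hne_i => [|b l] // _; exists b; rewrite mem_head.
  have [x [Hbx HxF _]] := BP1 (G1 _ _ Hi Hb).
  have := FVT3 [::] HsepB (BV_all (subterm_nil M)) Hbx (wf_disj Hwf HxF).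
  by rewrite cat0s (G3 _ _ Hi Hb) nth_index.
exists N; split; last split; last split; last split; last split.
- rewrite /wf_term HBN (map_inj_in_uniq HinjB).
  case/andP: Hwf => -> _ /=; apply/allP => z Hz; apply/negP => Hzb.
  have := bigN z; rewrite HBN => /(_ Hzb); rewrite ltnNge HYb' //; exact: FVN1.
- by move=> a; rewrite HN; case: (subterm M a).
- move=> a; rewrite /al0 /bp_of_term HN.
  case HS: (subterm M a) => [S|] //=.
  have Hst : all (fun v => v \in FV N) (FV (Tr sg f (BV M) a S)) =
             all (fun v => v \in FV M) (FV S).
    apply/allP/allP => H v Hv.
      case Hvb: (v \in BV M).
        have Hs := FVT1 f a HinjB (BV_all HS) Hv Hvb.
        have := HYb' _ (FVN1 _ (H _ Hs)); have [_ Hlt] := Hsg1 v Hvb.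
        by rewrite leqNgt Hlt.
      by have := FV_sub HS Hv; rewrite Hvb orbF.
    case/FVT2: Hv => [[w [Hw Hwb ->]]|[q [x [Hq Hx ->]]]].
      by have := wf_disj Hwf (H _ Hw); rewrite Hwb.
    have HMq : subterm M (a ++ q) = Some (Var x) by rewrite subterm_cat HS.
    have [i [Hi Hqi _]] := FO _ _ HMq Hx.
    by apply: FVN2; rewrite (G3 _ _ Hi Hqi) mem_nth // HsY.
  rewrite Hst; case: ifP => // Hall.
  have Hfa : forall q x, subterm S q = Some (Var x) -> x \notin BV M ->
      Om (f (a ++ q)) = Om x.
    by move=> q x Hq Hx; apply: (HfOm (a ++ q) x _ Hx); rewrite subterm_cat HS.
  have Hty' := tyofT HOs (BV_all HS) Hfa.
  clear Hst; case: S HS Hall Hfa Hty' => [x|x P|P Q] HS Hall Hfa Hty'.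
  + have HxF : x \in FV M by move: Hall => /= /andP[].
    rewrite /= (negbTE (wf_disj Hwf HxF)) /=.
    by rewrite (HfOm a x HS (wf_disj Hwf HxF)).
  + by [].
  + change (omap SApp (tyof Om (Tr sg f (BV M) a (App P Q))) = omap SApp (tyof Om (App P Q))).
    by rewrite Hty'.
- by move=> tau Ht; exact: (type_T Hth Hord HOs HfOm Ht (subterm_nil M)).
- split => // x; apply/idP/idP; [exact: FVN1 | exact: FVN2].
- move=> y bi Hin b; have [i [Hi -> ->]] := zip_mem y0 [::] HsY Hin.
  rewrite HN; split.
    case HS: (subterm M b) => [S|] //= [].
    case: S HS => [x|x P|P Q] HS //=; case: ifP => Hxb [Heq].
      have := HYb' (nth y0 Y i) (mem_nth _ Hi); have [_ Hlt] := Hsg1 x Hxb.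
      by rewrite -Heq leqNgt Hlt.
    have [k [Hk Hbk _]] := FO b x HS (negbT Hxb).
    move: Heq; rewrite (G3 k b Hk Hbk) => /Yinj <- //; by rewrite HsY.
  move=> Hb; have Hi' : i < size bs by rewrite -HsY.
  have [x [Hbx HxF _]] := BP1 (G1 i b Hi' Hb).
  by rewrite Hbx /= (negbTE (wf_disj Hwf HxF)) (G3 i b Hi' Hb).
Qed.
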